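(* Let $\Gamma$ be a distance-regular graph with diameter $D\ge3$ and $a_1\ne0$, and let $\sigma_0,\dots,\sigma_D$ be a nontrivial pseudo cosine sequence. Then there exists at most one nontrivial pseudo cosine sequence $\rho_0,\dots,\rho_D$ such that $\sigma_0,\dots,\sigma_D$ and $\rho_0,\dots,\rho_D$ form a tight pair. If such $\rho_0,\dots,\rho_D$ exists, then the corresponding auxiliary parameter is unique.
   Context: $\Gamma$ is a finite connected undirected graph without loops or multiple edges, distance-regular with diameter $D$, intersection numbers $a_i,b_i,c_i$ ($c_0=0$, $b_D=0$), valency $k$, $c_i+a_i+b_i=k$. For $\theta\in\mathbb{R}$ the pseudo cosine sequence for $\theta$ is the sequence of reals $\sigma_0,\dots,\sigma_D$ with $\sigma_0=1$ and $c_i\sigma_{i-1}+a_i\sigma_i+b_i\sigma_{i+1}=\theta\sigma_i$ for $0\le i\le D-1$; nontrivial means $\sigma_1\ne1$. Pseudo cosine sequences $\sigma_i$, $\rho_i$ form a tight pair if $(\sigma_i\rho_i)_{i=0}^D$ is a pseudo cosine sequence. For a tight pair of nontrivial pseudo cosine sequences, an auxiliary parameter is a real $\varepsilon$ with $\sigma_i\rho_i-\sigma_{i-1}\rho_{i-1}=\varepsilon(\sigma_{i-1}\rho_i-\sigma_i\rho_{i-1})$ for $1\le i\le D$. *)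

(* Defs.v *)
From HB Require Import structures.
From mathcomp Require Import all_boot all_order all_algebra.
Set Implicit Arguments. Unset Strict Implicit. Unset Printing Implicit Defensive.
Import Order.TTheory GRing.Theory Num.Theory.

Definition simple_graph (T : finType) (adj : rel T) : Prop :=
  symmetric adj /\ irreflexive adj.

Fixpoint walkn (T : finType) (adj : rel T) (n : nat) (x y : T) : bool :=
  match n with
  | 0 => x == y
  | n'.+1 => [exists z, adj x z && walkn adj n' z y]
  end.

Definition connected_graph (T : finType) (adj : rel T) : Prop :=
  forall x y : T, exists n, walkn adj n x y.

(* Path-length distance: the least n with a walk of length n from x to y
   (on a connected graph this is < #|T|). *)
Definition gdist (T : finType) (adj : rel T) (x y : T) : nat :=
  find (fun n => walkn adj n x y) (iota 0 #|T|).

Definition has_diameter (T : finType) (adj : rel T) (D : nat) : Prop :=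
  (forall x y : T, gdist adj x y <= D) /\ exists x y : T, gdist adj x y = D.

Definition distance_regular (T : finType) (adj : rel T) (D : nat)
    (a b c : nat -> nat) : Prop :=
  [/\ simple_graph adj, connected_graph adj, has_diameter adj D &
    forall (i : nat) (x y : T), i <= D -> gdist adj x y = i ->
      [/\ #|[set z | adj y z & (gdist adj x z).+1 == i]| = c i,
          #|[set z | adj y z & gdist adj x z == i]| = a i &
          #|[set z | adj y z & gdist adj x z == i.+1]| = b i]].

Local Open Scope ring_scope.

Definition pseudo_cosine_for (R : realFieldType) (D : nat) (a b c : nat -> nat)
    (theta : R) (s : nat -> R) : Prop :=
  s 0%N = 1 /\
  forall i : nat, (i < D)%N ->
    (c i)%:R * s i.-1 + (a i)%:R * s i + (b i)%:R * s i.+1 = theta * s i.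

Definition pseudo_cosine (R : realFieldType) (D : nat) (a b c : nat -> nat)
    (s : nat -> R) : Prop :=
  exists theta : R, pseudo_cosine_for D a b c theta s.

Definition nontrivial_pcs (R : realFieldType) (D : nat) (a b c : nat -> nat)
    (s : nat -> R) : Prop :=
  pseudo_cosine D a b c s /\ s 1%N <> 1.

Definition tight_pair (R : realFieldType) (D : nat) (a b c : nat -> nat)
    (s r : nat -> R) : Prop :=
  pseudo_cosine D a b c s /\ pseudo_cosine D a b c r /\
  pseudo_cosine D a b c (fun i => s i * r i).

Definition auxiliary_parameter (R : realFieldType) (D : nat)
    (s r : nat -> R) (eps : R) : Prop :=
  forall i : nat, (1 <= i <= D)%N ->
    s i * r i - s i.-1 * r i.-1 = eps * (s i.-1 * r i - s i * r i.-1).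

(* Main.v *)
Require Import Defs.
From mathcomp Require Import all_boot all_order all_algebra.
From mathcomp Require Import ring lra.
Import Order.TTheory GRing.Theory Num.Theory.
Set Implicit Arguments. Unset Strict Implicit.

Section G.
Variables (T : finType) (adj : rel T).

Lemma gdist_le n x y : walkn adj n x y -> (gdist adj x y <= n)%N.
Proof.
move=> w; rewrite /gdist.
case: (ltnP n #|T|) => h; last by apply: leq_trans (find_size _ _) _; rewrite size_iota.
rewrite leqNgt; apply/negP => lt.
have := before_find 0 lt; rewrite nth_iota // add0n => /negP; exact.
Qed.

Lemma gdist_size x y : (gdist adj x y <= #|T|)%N.
Proof. by rewrite /gdist -{2}(size_iota 0 #|T|) find_size. Qed.

Lemma gdist_walk x y : (gdist adj x y < #|T|)%N -> walkn adj (gdist adj x y) x y.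
Proof.
move=> h; have hh : has (fun n => walkn adj n x y) (iota 0 #|T|).
  by rewrite has_find size_iota.
by have := nth_find 0 hh; rewrite nth_iota // (leq_ltn_trans _ h).
Qed.

Lemma gdist0 x : gdist adj x x = 0%N.
Proof. by apply/eqP; rewrite -leqn0; apply: (@gdist_le 0) => /=. Qed.

Lemma gdist_eq0 x y : gdist adj x y = 0%N -> x = y.
Proof.
move=> h; have : (gdist adj x y < #|T|)%N by rewrite h; apply/card_gt0P; exists x.
by move/gdist_walk; rewrite h /= => /eqP.
Qed.

Lemma walk_snoc n x y z : walkn adj n x y -> adj y z -> walkn adj n.+1 x z.
Proof.
elim: n x => [|n IH] x /=.
  by move=> /eqP -> ayz; apply/existsP; exists z; rewrite ayz /=.
case/existsP=> u /andP[axu wu] ayz; apply/existsP; exists u; rewrite axu /=.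
exact: IH.
Qed.

Lemma gdist_tri x y z : adj y z -> (gdist adj x z <= (gdist adj x y).+1)%N.
Proof.
move=> ayz; case: (ltnP (gdist adj x y) #|T|) => h.
  by apply: (@gdist_le (gdist adj x y).+1); apply: walk_snoc (gdist_walk h) ayz.
by apply: leq_trans (gdist_size _ _) _; apply: leq_trans h _.
Qed.

Lemma gdist_adj x y : irreflexive adj -> adj x y -> gdist adj x y = 1%N.
Proof.
move=> irr axy; have : (gdist adj x y <= 1)%N.
  by apply: (@gdist_le 1) => /=; apply/existsP; exists y; rewrite axy /=.
case: (gdist adj x y) (@gdist_eq0 x y) => [|[|//]] //.
by move=> /(_ erefl) xy; move: axy; rewrite xy irr.
Qed.

End G.
Lemma dr_facts (T : finType) (adj : rel T) D a b c :
  distance_regular adj D a b c -> (1 <= D)%N ->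
  [/\ c 0%N = 0%N, a 0%N = 0%N, b 0%N = (1 + a 1%N + b 1%N)%N, c 1%N = 1%N &
      forall i, (i < D)%N -> b i <> 0%N].
Proof.
case=> [[sym irr] conn [_ [x0 [w0 dw0]]] dr] D1.
have bpos : forall i, (i < D)%N -> b i <> 0%N.
  move=> i iD bi0.
  have key : forall n u z, walkn adj n u z -> (gdist adj x0 u <= i)%N -> (gdist adj x0 z <= i)%N.
    elim=> [|n IH] u z /=; first by move=> /eqP ->.
    case/existsP=> v /andP[auv wv] hu; apply: (IH v) => //.
    have := gdist_tri x0 auv; rewrite leq_eqVlt ltnS; case/orP=> [/eqP e|]; last first.
      by move=> h; apply: leq_trans h hu.
    move: hu; rewrite leq_eqVlt => /orP[/eqP ei|]; last by rewrite -e.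
    have [_ _ hb] := dr i x0 u (ltnW iD) ei.
    move: hb; rewrite bi0 => /eqP; rewrite cards_eq0 => /eqP/setP/(_ v).
    by rewrite !inE auv e ei eqxx.
  have [n wn] := conn x0 w0.
  have := key _ _ _ wn; rewrite gdist0 => /(_ isT); rewrite dw0 => h.
  by move: (leq_ltn_trans h iD); rewrite ltnn.
have : exists x y, adj x y.
  have [n wn] := conn x0 w0.
  case: n wn => [/= /eqP e|n /= /existsP[z /andP[axz _]]]; last by exists x0, z.
  by move: dw0; rewrite e gdist0 => e0; move: D1; rewrite -e0.
case=> x [y axy].
have dxy := gdist_adj irr axy.
have [c1 a1 b1] := dr 1%N x y D1 dxy.
have [c0 a0 b0] := dr 0%N y y (leq0n _) (gdist0 _ _).
have ayx : adj y x by rewrite sym.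
have ec1 : [set z | adj y z & (gdist adj x z).+1 == 1%N] = [set x].
  apply/setP=> z; rewrite !inE eqSS; apply/andP/eqP=> [[_ /eqP/gdist_eq0 ->]//|->].
  by rewrite ayx gdist0.
split => //.
- rewrite -c0; apply/eqP; rewrite cards_eq0; apply/eqP/setP=> z; rewrite !inE /=.
  by rewrite andbF.
- rewrite -a0; apply/eqP; rewrite cards_eq0; apply/eqP/setP=> z; rewrite !inE.
  by apply/negP=> /andP[ayz /eqP/gdist_eq0 e]; move: ayz; rewrite e irr.
- rewrite -b0 -a1 -b1.
  set S1 := [set z | adj y z & gdist adj x z == 1%N].
  set S2 := [set z | adj y z & gdist adj x z == 2%N].
  have -> : #|[set z | adj y z & gdist adj y z == 1%N]| = #|([set x] :|: S1) :|: S2|.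
    apply: eq_card => z; rewrite !inE; case ayz: (adj y z) => /=; last first.
      by rewrite !orbF; apply/esym/negP=> /eqP e; move: ayx; rewrite -e ayz.
    rewrite gdist_adj // eqxx /=.
    have := gdist_tri x ayz; rewrite dxy.
    case e: (gdist adj x z) => [|[|[|]]] //= _.
    - by rewrite (gdist_eq0 e) eqxx.
    - by rewrite orbT.
    - by rewrite orbT.
  rewrite cardsU cardsU cards1.
  have -> : [set x] :&: S1 = set0.
    by apply/setP=> z; rewrite !inE; apply/negP=> /andP[/eqP -> /andP[_]]; rewrite gdist0.
  have -> : ([set x] :|: S1) :&: S2 = set0.
    apply/setP=> z; rewrite !inE; apply/negP=> /andP[/orP[/eqP ->|/andP[_ /eqP ->]] /andP[_]] //.
    by rewrite gdist0.
  by rewrite !cards0 !subn0.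
- by rewrite -c1 ec1 cards1.
Qed.

Local Open Scope ring_scope.

Section Alg.
Variables (R : realFieldType) (A1 B1 : R).
Local Notation k := (1 + A1 + B1).

Definition Qp (s r : R) :=
  (k * s^+2 - A1 * s - 1) * (k * r^+2 - A1 * r - 1) - B1 * (k * s^+2 * r^+2 - A1 * s * r - 1).

Lemma Qp_eq0 s r s2 r2 :
  B1 * s2 = k * s^+2 - A1 * s - 1 -> B1 * r2 = k * r^+2 - A1 * r - 1 ->
  1 + A1 * (s * r) + B1 * (s2 * r2) = k * (s * r) * (s * r) -> Qp s r = 0.
Proof.
move=> e1 e2 e3; rewrite /Qp -e1 -e2.
have -> : B1 * s2 * (B1 * r2) = B1 * (B1 * (s2 * r2)) by ring.
have -> : B1 * (s2 * r2) = k * (s * r) * (s * r) - 1 - A1 * (s * r) by rewrite -e3; ring.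
ring.
Qed.

Lemma Qp_uniq (hA' : 0 < A1) (hB' : 0 < B1) s r r' : s != 1 -> r != 1 -> r' != 1 -> Qp s r = 0 -> Qp s r' = 0 -> r = r'.
Proof.
move=> s1 r1 r'1 q q'.
set As := k * s^+2 - A1 * s - 1.
set al := k * As - B1 * k * s^+2.
set ga := - A1 * As + B1 * A1 * s.
set de := - As + B1.
have hQ : forall x, Qp s x = (x - 1) * (al * (x + 1) + ga).
  by move=> x; rewrite /Qp /al /ga /As; ring.
have kp : 0 < k by move: hA' hB'; lra.
move: q q'; rewrite !hQ => /eqP; rewrite mulf_eq0 subr_eq0 (negbTE r1) /= => /eqP q.
move=> /eqP; rewrite mulf_eq0 subr_eq0 (negbTE r'1) /= => /eqP q'.
apply/eqP; rewrite -subr_eq0; apply/negP => nr.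
have : al * (r - r') = 0.
  have -> : al * (r - r') = (al * (r + 1) + ga) - (al * (r' + 1) + ga) by ring.
  by rewrite q q' subrr.
move/eqP; rewrite mulf_eq0 (negPf (introN idP nr)) orbF => /eqP al0.
have ga0 : ga = 0 by move: q; rewrite al0 mul0r add0r.
have de0 : de = 0.
  have -> : de = - (al + ga) by rewrite /de /al /ga /As; ring.
  by rewrite al0 ga0 addr0 oppr0.
have : k * (s - 1) * ((1 + A1) * s + 1) = 0 by rewrite -al0 /al /As; ring.
move/eqP; rewrite !mulf_eq0 (gt_eqF kp) /= subr_eq0 (negbTE s1) /= => /eqP hs.
have hu : (1 + A1) * s = -1 by rewrite -[LHS]addr0 -(subrr 1) addrA hs add0r.
have : de * (1 + A1)^+2 = B1 * A1 * (A1 + 2).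
  have -> : de * (1 + A1)^+2 = - (k * ((1 + A1) * s)^+2 - A1 * (1+A1) * ((1 + A1) * s) - (1 + A1)^+2) + B1 * (1 + A1)^+2.
    by rewrite /de /As; ring.
  rewrite hu; ring.
rewrite de0 mul0r => /esym/eqP; rewrite !mulf_eq0 (gt_eqF hA') (gt_eqF hB') /=.
by apply/negP; rewrite gt_eqF //; lra.
Qed.

Lemma Qp_neg1 (hA' : 0 < A1) (hB' : 0 < B1) : Qp (-1) (-1) != 0.
Proof.
have -> : Qp (-1) (-1) = 4 * A1 * (B1 + A1) by rewrite /Qp; ring.
by rewrite !mulf_neq0 // gt_eqF //; lra.
Qed.

End Alg.

Theorem corollary12p2 (R : realFieldType) (T : finType) (adj : rel T)
    (D : nat) (a b c : nat -> nat) (sigma : nat -> R) :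
  distance_regular adj D a b c -> (3 <= D)%N -> a 1%N <> 0%N ->
  nontrivial_pcs D a b c sigma ->
  (forall rho rho' : nat -> R,
      nontrivial_pcs D a b c rho -> tight_pair D a b c sigma rho ->
      nontrivial_pcs D a b c rho' -> tight_pair D a b c sigma rho' ->
      forall i : nat, (i <= D)%N -> rho i = rho' i) /\
  (forall rho : nat -> R,
      nontrivial_pcs D a b c rho -> tight_pair D a b c sigma rho ->
      forall e1 e2 : R,
        auxiliary_parameter D sigma rho e1 ->
        auxiliary_parameter D sigma rho e2 -> e1 = e2).
Proof.
move=> hdr D3 a10 [_ s1ne].
have D1 : (1 <= D)%N by apply: leq_trans D3.
have D2 : (1 < D)%N by apply: leq_trans D3.
have [c0 a0 b0 c1 bpos] := dr_facts hdr D1.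
set A1 : R := (a 1%N)%:R; set B1 : R := (b 1%N)%:R.
have hA : 0 < A1 by rewrite ltr0n lt0n; apply/eqP.
have hB : 0 < B1 by rewrite ltr0n lt0n; apply/eqP; exact: bpos.
have pc01 : forall th (u : nat -> R), pseudo_cosine_for D a b c th u ->
    th = (1 + A1 + B1) * u 1%N /\ 1 + A1 * u 1%N + B1 * u 2%N = th * u 1%N.
  move=> th u [u0 hu]; split.
    have := hu 0%N (leq_trans (isT : (0 < 1)%N) D1).
    rewrite /= u0 c0 a0 b0 !mulr1 => <-; rewrite !natrD; ring.
  by have := hu 1%N D2; rewrite /= u0 c1 mulr1.
have s1 : sigma 1%N != 1 by apply/eqP.
have key : forall rho : nat -> R, tight_pair D a b c sigma rho ->
    Qp A1 B1 (sigma 1%N) (rho 1%N) = 0.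
  move=> rho [[th hs] [[th' hr] [th'' hsr]]].
  have [e1 f1] := pc01 _ _ hs; have [e2 f2] := pc01 _ _ hr; have [e3 f3] := pc01 _ _ hsr.
  apply: (@Qp_eq0 _ _ _ _ _ (sigma 2%N) (rho 2%N)).
  - have -> : B1 * sigma 2%N = th * sigma 1%N - 1 - A1 * sigma 1%N by rewrite -f1; ring.
    by rewrite e1; ring.
  - have -> : B1 * rho 2%N = th' * rho 1%N - 1 - A1 * rho 1%N by rewrite -f2; ring.
    by rewrite e2; ring.
  - by rewrite f3 e3 /=; ring.
split.
  move=> rho rho' [_ r1] tp [_ r'1] tp'.
  have er1 : rho 1%N = rho' 1%N.
    by apply: (Qp_uniq hA hB s1 _ _ (key _ tp) (key _ tp')); apply/eqP.
  case: tp => _ [[th hr] _]; case: tp' => _ [[th' hr'] _].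
  have eth : th = th'.
    by have [-> _] := pc01 _ _ hr; have [-> _] := pc01 _ _ hr'; rewrite er1.
  subst th'.
  have H : forall i, (i < D)%N -> rho i = rho' i /\ rho i.+1 = rho' i.+1.
    elim=> [|i IH] iD; first by rewrite hr.1 hr'.1.
    have [h1 h2] := IH (ltnW iD); split => //.
    have E1 := hr.2 i.+1 iD; have E2 := hr'.2 i.+1 iD; simpl in E1, E2.
    rewrite h1 h2 in E1.
    have : (b i.+1)%:R * rho i.+2 = (b i.+1)%:R * rho' i.+2 :> R.
      apply: (@addrI _ ((c i.+1)%:R * rho' i + (a i.+1)%:R * rho' i.+1)).
      by rewrite E1 E2.
    move/mulfI; apply.
    by rewrite pnatr_eq0; apply/eqP; exact: bpos.
  move=> [|i] iD; first by rewrite hr.1 hr'.1.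
  exact: (H i iD).2.
move=> rho _ tp e1 e2 h1 h2.
have := h1 1%N; have := h2 1%N; rewrite /= D1 => /(_ isT) E2 /(_ isT) E1.
have [[? [s0 _]] [[? [r0 _]] _]] := tp.
move: (E1) E2; rewrite s0 r0 !mul1r !mulr1 => -> /eqP.
case: (eqVneq (rho 1%N) (sigma 1%N)) => [er|ne].
  move=> _; exfalso.
  move: E1; rewrite s0 r0 er !mulr1 !mul1r subrr mulr0 => ss.
  have sm : sigma 1%N = -1.
    move/eqP: ss; rewrite subr_eq0 => /eqP ss.
    have : (sigma 1%N - 1) * (sigma 1%N + 1) = 0.
      have -> : (sigma 1%N - 1) * (sigma 1%N + 1) = sigma 1%N * sigma 1%N - 1 by ring.
      by rewrite ss subrr.
    move/eqP; rewrite mulf_eq0 subr_eq0 (negPf s1) /= addr_eq0 => /eqP //.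
  have := key _ tp; rewrite er sm; apply/eqP; exact: Qp_neg1.
by rewrite eq_sym -subr_eq0 -mulrBl mulf_eq0 subr_eq0 subr_eq0 (negPf ne) orbF => /eqP.
Qed.
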